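(* In the mirror triangle method with inexact directional derivatives (see context), let $\mathbb{E}_{k+1}$ denote conditional expectation over the randomness of iteration $k+1$ given iterations $1,\dots,k$. For every $u\in\mathbb{R}^n$ and $k\ge0$, with $R_k=\|u_k-u\|_L$ and $M_k=\|\nabla f(y_{k+1})\|_2$, $$\alpha_{k+1}\langle\nabla f(y_{k+1}),u_k-u\rangle\le A_{k+1}\big(f(y_{k+1})-\mathbb{E}_{k+1}f(x_{k+1})\big)+V(u,u_k)-\mathbb{E}_{k+1}V(u,u_{k+1})+\frac{A_{k+1}}L\delta^2+A_{k+1}\delta\frac{M_k}{L\sqrt n}+\alpha_{k+1}\delta\frac{\sqrt n}{\sqrt L}R_k.$$
   Context: $f:\mathbb{R}^n\to\mathbb{R}$ is convex, differentiable, with $\|\nabla f(x)-\nabla f(y)\|_2\le L\|x-y\|_2$. $\|x\|_L^2=L\sum_ix_i^2$ and $V(x,y)=\frac12\|x-y\|_L^2$. For each $k\ge0$, $e_{k+1}$ is a random vector on the Euclidean unit sphere such that, conditionally on the previous iterations, $\mathbb{E}[e_{k+1}^ie_{k+1}^j]=0$ for $i\ne j$ and $\mathbb{E}[(e_{k+1}^i)^2]=\frac1n$; $\tilde\delta_{k+1}$ is a random real with $|\tilde\delta_{k+1}|\le\delta$; $\tilde\nabla f(y)=n(\langle\nabla f(y),e_{k+1}\rangle+\tilde\delta_{k+1})e_{k+1}$. Method: $x_0=u_0=y_0$, $\alpha_0=1-\frac1n$, $A_0=\alpha_0$; for $k\ge0$: $\alpha_{k+1}=\frac{k+2n}{2n^2}$,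 $A_{k+1}=A_k+\alpha_{k+1}$, $y_{k+1}=\frac{\alpha_{k+1}u_k+A_kx_k}{A_{k+1}}$, $u_{k+1}=\arg\min_{x\in\mathbb{R}^n}\{V(x,u_k)+\alpha_{k+1}\langle\tilde\nabla f(y_{k+1}),x\rangle\}$, $x_{k+1}=y_{k+1}+n\frac{\alpha_{k+1}}{A_{k+1}}(u_{k+1}-u_k)$. *)

(* Defs.v *)
From HB Require Import structures.
From mathcomp Require Import all_boot all_order all_algebra.
From mathcomp Require Import all_classical all_reals all_analysis.
Set Implicit Arguments. Unset Strict Implicit. Unset Printing Implicit Defensive.
Import Order.TTheory GRing.Theory Num.Theory.
Import numFieldNormedType.Exports.
Local Open Scope ring_scope.

Section MTM.
Variables (R : realType) (n : nat).

Definition dotv (x y : 'rV[R]_n) : R := \sum_(i < n) x ord0 i * y ord0 i.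
Definition norm2 (x : 'rV[R]_n) : R := Num.sqrt (\sum_(i < n) x ord0 i ^+ 2).

Definition normL (L : R) (x : 'rV[R]_n) : R := Num.sqrt (L * \sum_(i < n) x ord0 i ^+ 2).
Definition Vdist (L : R) (x y : 'rV[R]_n) : R := 2^-1 * normL L (x - y) ^+ 2.

Definition alpha (k : nat) : R :=
  match k with
  | 0%N => 1 - n%:R^-1
  | k'.+1 => (k'%:R + 2 * n%:R) / (2 * n%:R ^+ 2)
  end.
Definition Aseq (k : nat) : R := \sum_(i < k.+1) alpha i.

Definition gtilde (gradf : 'rV[R]_n -> 'rV[R]_n) (y e : 'rV[R]_n) (dt : R) : 'rV[R]_n :=
  (n%:R * (dotv (gradf y) e + dt)) *: e.

Definition ynext (k : nat) (x u : 'rV[R]_n) : 'rV[R]_n :=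
  (Aseq k.+1)^-1 *: (alpha k.+1 *: u + Aseq k *: x).

(* One iteration k -> k+1 of the method, driven by (e_{k+1}, delta~_{k+1}):
   u' = argmin_z { V(z,u) + alpha_{k+1} <grad~ f(y_{k+1}), z> },
   x' = y_{k+1} + n alpha_{k+1}/A_{k+1} (u' - u). *)
Definition mtm_step (L : R) (gradf : 'rV[R]_n -> 'rV[R]_n) (k : nat)
    (x u e : 'rV[R]_n) (dt : R) (x' u' : 'rV[R]_n) : Prop :=
  let y := ynext k x u in
  let g := gtilde gradf y e dt in
  (forall z : 'rV[R]_n,
      Vdist L u' u + alpha k.+1 * dotv g u' <= Vdist L z u + alpha k.+1 * dotv g z)
  /\ x' = y + (n%:R * alpha k.+1 / Aseq k.+1) *: (u' - u).

End MTM.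

Arguments alpha {R} n k.
Arguments Aseq {R} n k.

(* Main.v *)
Require Import Defs.
From HB Require Import structures.
From mathcomp Require Import all_boot all_order all_algebra.
From mathcomp Require Import all_classical all_reals all_analysis.
From mathcomp Require Import ring lra.
Import Order.TTheory GRing.Theory Num.Theory.
Import numFieldNormedType.Exports.
Local Open Scope ring_scope.
Section MBsec.
Context {R : realType} {d : measure_display} {T : measurableType d}.
Variable P : probability T R.

Definition MB (h : T -> R) :=
  measurable_fun setT h /\ exists M : R, forall w, `|h w| <= M.

Lemma MB_cst c : MB (fun=> c).
Proof. split; first exact: measurable_cst. by exists `|c|. Qed.

Lemma MB_add f g : MB f -> MB g -> MB (fun w => f w + g w).
Proof.
move=> [mf [M1 h1]] [mg [M2 h2]]; split; first exact: measurable_realfun.measurable_funD.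
exists (M1 + M2) => w; apply: le_trans (ler_normD _ _) _; exact: lerD.
Qed.

Lemma MB_mul f g : MB f -> MB g -> MB (fun w => f w * g w).
Proof.
move=> [mf [M1 h1]] [mg [M2 h2]]; split; first exact: measurable_realfun.measurable_funM.
exists (M1 * M2) => w; rewrite normrM; apply: ler_pM => //; exact: normr_ge0.
Qed.

Lemma MB_int f : MB f -> P.-integrable setT (EFin \o f).
Proof.
move=> [mf [M hM]]; apply: measurable_bounded_integrable => //.
  by apply: (le_lt_trans (probability_le1 P measurableT)); rewrite ltry.
apply: (@sub_boundedl _ _ _ _ (cst M) _ (globally_filter _) _ (bounded_cst M _)) => x _ /=.
by apply: le_trans (hM x) _; exact: ler_norm.
Qed.

Lemma MB_sum (I : Type) (s : seq I) (h : I -> T -> R) :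
  (forall i, MB (h i)) -> MB (fun w => \sum_(i <- s) h i w).
Proof.
move=> hh; elim: s => [|a s IH].
  under [fun w => _]funext => w do rewrite big_nil. exact: MB_cst.
under [fun w => _]funext => w do rewrite big_cons. exact: MB_add.
Qed.

Lemma int_mono_any (f g : T -> \bar R) : (forall x, (f x <= g x)%E) ->
  (\int[P]_x f x <= \int[P]_x g x)%E.
Proof.
move=> fg; rewrite integralE [X in (_ <= X)%E]integralE; apply: leeB.
  rewrite !ge0_integralTE //; apply: ereal_sup_le => _ [h hh <-].
  exists h => //= x; apply: le_trans (hh x) _; apply: (@funepos_le _ _ setT); try exact: mem_set.
  by move=> y _; exact: fg.
rewrite !ge0_integralTE //; apply: ereal_sup_le => _ [h hh <-].
exists h => //= x; apply: le_trans (hh x) _; apply: (@funeneg_le _ _ setT); try exact: mem_set.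
by move=> y _; exact: fg.
Qed.
End MBsec.
Section Vec.
Context {R : realType} {n : nat}.
Implicit Types (x y z u g : 'rV[R]_n).

Lemma sqr_norm2 x : norm2 x ^+ 2 = \sum_(i < n) x ord0 i ^+ 2.
Proof. by rewrite /norm2 sqr_sqrtr // sumr_ge0 // => i _; exact: sqr_ge0. Qed.

Lemma VdistE (L : R) x y : 0 <= L ->
  Vdist L x y = 2^-1 * (L * \sum_(i < n) (x ord0 i - y ord0 i) ^+ 2).
Proof.
move=> L0; rewrite /Vdist /normL sqr_sqrtr; last first.
  by apply: mulr_ge0 => //; apply: sumr_ge0 => i _; exact: sqr_ge0.
by congr (_ * (_ * _)); apply: eq_bigr => i _; rewrite !mxE.
Qed.

Lemma argmin_eq (L a : R) g u u' : 0 < L ->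
  (forall z, Vdist L u' u + a * dotv g u' <= Vdist L z u + a * dotv g z) ->
  u' = u - (a / L) *: g.
Proof.
move=> L0 hmin.
set zs := u - (a / L) *: g.
have key : forall z, Vdist L z u + a * dotv g z =
   Vdist L zs u + a * dotv g zs + 2^-1 * (L * \sum_(i < n) (z ord0 i - zs ord0 i) ^+ 2).
  move=> z; rewrite !VdistE ?ltW // /dotv !mulr_sumr -!big_split /=.
  apply: eq_bigr => i _; rewrite /zs !mxE; field.
  by rewrite lt0r_neq0.
have := hmin zs; rewrite (key u') -[X in _ <= X]addr0 lerD2l => h.
have hs : \sum_(i < n) (u' ord0 i - zs ord0 i) ^+ 2 = 0.
  apply/eqP; rewrite eq_le sumr_ge0 ?andbT; last by move=> i _; exact: sqr_ge0.
  rewrite -(pmulr_rle0 _ L0) -(@pmulr_rle0 _ 2^-1) //.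
apply/rowP => i.
have := psumr_eq0P (fun j _ => sqr_ge0 _) hs; move/(_ i isT).
by move/eqP; rewrite sqrf_eq0 subr_eq0 => /eqP.
Qed.
End Vec.
Section Desc.
Context {R : realType} {n : nat}.
Implicit Types (x y z u g h : 'rV[R]_n).

Lemma amgm (lam a b : R) : 0 < lam -> a * b <= (lam * a ^+ 2 + lam^-1 * b ^+ 2) / 2.
Proof.
move=> l0.
have -> : (lam * a ^+ 2 + lam^-1 * b ^+ 2) / 2 = a * b + lam^-1 * (lam * a - b) ^+ 2 / 2.
  by field; rewrite lt0r_neq0.
rewrite lerDl; apply: divr_ge0 => //; apply: mulr_ge0; [by rewrite invr_ge0 ltW|exact: sqr_ge0].
Qed.

Lemma dot_amgm (lam : R) g h : 0 < lam ->
  dotv g h <= (lam * \sum_(i < n) g ord0 i ^+ 2 + lam^-1 * \sum_(i < n) h ord0 i ^+ 2) / 2.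
Proof.
move=> l0; rewrite /dotv !mulr_sumr -big_split mulr_suml /=.
by apply: ler_sum => i _; exact: amgm.
Qed.

Lemma deriv_line (f : 'rV[R]_n -> R^o) y h t :
  derive (fun s : R => f (y + s *: h)) t 1 = derive f (y + t *: h) h.
Proof.
rewrite /derive; do 2 f_equal; apply: funext => s /=.
congr (_ *: (f _ - _)); apply/rowP => j; rewrite !mxE mulrDl addrCA; congr (_ * _ + _); exact: mulr1.
Qed.

Lemma derivable_line (f : 'rV[R]_n -> R^o) y h t :
  derivable (fun s : R => f (y + s *: h)) t 1 = derivable f (y + t *: h) h.
Proof.
have E (s : R) : ((fun s : R => f (y + s *: h)) \o shift t) s%:A = (f \o shift (y + t *: h)) (s *: h).
  rewrite /=; congr f; apply/rowP => j; rewrite !mxE mulrDl addrCA; congr (_ * _ + _); exact: mulr1.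
rewrite /derivable; by under eq_fun do rewrite E.
Qed.

Lemma dotvBl g1 g2 h : dotv g1 h - dotv g2 h = dotv (g1 - g2) h.
Proof. by rewrite /dotv -sumrB; apply: eq_bigr => i _; rewrite !mxE mulrBl. Qed.

Lemma sum_sq_scale (c : R) h :
  \sum_(i < n) (c *: h) ord0 i ^+ 2 = c ^+ 2 * \sum_(i < n) h ord0 i ^+ 2.
Proof. by rewrite mulr_sumr; apply: eq_bigr => i _; rewrite !mxE exprMn. Qed.

Lemma descent (f : 'rV[R]_n -> R^o) (gradf : 'rV[R]_n -> 'rV[R]_n) (L : R) :
  0 < L ->
  (forall x, differentiable f x /\ forall h, 'd f x h = dotv (gradf x) h) ->
  (forall x y, norm2 (gradf x - gradf y) <= L * norm2 (x - y)) ->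
  forall y h, f (y + h) <= f y + dotv (gradf y) h + L / 2 * \sum_(i < n) h ord0 i ^+ 2.
Proof.
move=> L0 f_diff f_lip y h.
set S := \sum_(i < n) h ord0 i ^+ 2.
set B := dotv (gradf y) h.
set G := fun s : R => f (y + s *: h).
have dG (t : R) : is_derive t (1 : R) G (dotv (gradf (y + t *: h)) h).
  have hd : derivable G t 1.
    by rewrite /G derivable_line; exact: diff_derivable (f_diff _).1.
  have := derivableP hd; rewrite /G deriv_line deriveE; last exact: (f_diff _).1.
  by rewrite (f_diff _).2.
pose psi := G - B \*: (@id R) - (L / 2 * S) \*: ((@id R) ^+ 2).
have dpsi (t : R) : is_derive t (1:R) psi (dotv (gradf (y + t *: h)) h - B *: 1 -
    (L / 2 * S) *: ((2%:R * (@id R) t ^+ 1) *: 1)).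
  apply: is_deriveB.
have sA (x : R) : x%:A = x := mulr1 x.
have psi_der (t : R) : derivable psi t 1 by have := dpsi t; case.
have key : psi 1 <= psi 0.
  apply: (@ler0_derive1_nincr _ psi 0 1) => //.
  - move=> t t01; rewrite derive1E derive_val /= !sA expr1.
    have t0 : 0 < t by move: t01; rewrite in_itv /= => /andP[].
    rewrite /B dotvBl.
    set a := gradf (y + t *: h) - gradf y.
    have Ha : \sum_(i < n) a ord0 i ^+ 2 <= L ^+ 2 * (t ^+ 2 * S).
      rewrite -sqr_norm2 -sum_sq_scale -sqr_norm2 -exprMn.
      have := f_lip (y + t *: h) y; rewrite addrAC subrr add0r => hl.
      by rewrite !expr2; apply: ler_pM => //; exact: sqrtr_ge0.
    have Lt : 0 < L * t by exact: mulr_gt0.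
    have S0 : 0 <= S by apply: sumr_ge0 => i _; exact: sqr_ge0.
    rewrite subr_le0.
    change (dotv a h <= (L / 2 * S) * (2 * t)).
    have iLt : 0 < (L * t)^-1 by rewrite invr_gt0.
    apply: le_trans (dot_amgm _ a h iLt) _; rewrite invrK.
    set q := \sum_(i < n) a ord0 i ^+ 2 in Ha *.
    rewrite -/S.
    apply: (@le_trans _ _ (((L * t)^-1 * (L ^+ 2 * (t ^+ 2 * S)) + L * t * S) / 2)).
      by rewrite ler_pM2r // lerD2r ler_pM2l.
    rewrite le_eqVlt; apply/orP; left; apply/eqP; field.
    by rewrite !lt0r_neq0.
  - have := @derivable_within_continuous R R^o psi `[0, 1]%R (fun t _ => psi_der t). done.
move: key; rewrite /psi /G.
change (f (y + 1 *: h) - B * 1 - L / 2 * S * (1 * 1) <=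
        f (y + 0 *: h) - B * 0 - L / 2 * S * (0 * 0) -> f (y + h) <= f y + B + L / 2 * S).
rewrite scale1r scale0r addr0 !mulr0 !mulr1 !subr0 => H.
lra.
Qed.
End Desc.

Section Prob.
Context {R : realType} {d : measure_display} {T : measurableType d}.
Variable P : probability T R.

Lemma Rint_sum (I : Type) (s : seq I) (h : I -> T -> R) :
  (forall i, MB (h i)) ->
  Rintegral P setT (fun w => \sum_(i <- s) h i w) = \sum_(i <- s) Rintegral P setT (h i).
Proof.
move=> hh; elim: s => [|a s IH].
  under [fun w => _]funext => w do rewrite big_nil.
  by rewrite Rintegral_cst // mul0r big_nil.
under [fun w => _]funext => w do rewrite big_cons.
rewrite big_cons RintegralD //; first by rewrite IH.
  exact: MB_int.
by apply: MB_int; exact: MB_sum.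
Qed.

Lemma Rint_cst (c : R) : Rintegral P setT (fun=> c) = c.
Proof.
rewrite Rintegral_cst //; have h1 := probability_setT P.
by rewrite (_ : fine _ = 1) ?mulr1 //; exact: (f_equal fine h1).
Qed.

Ltac MBt := repeat first [assumption | exact: MB_cst | apply: MB_add | apply: MB_mul].

Lemma Rint_lin (c0 c1 c2 c3 : R) (X Y Z : T -> R) : MB X -> MB Y -> MB Z ->
  Rintegral P setT (fun w => c0 + c1 * X w + c2 * Y w + c3 * Z w) =
  c0 + c1 * Rintegral P setT X + c2 * Rintegral P setT Y + c3 * Rintegral P setT Z.
Proof.
move=> hX hY hZ.
rewrite RintegralD //; try (apply: MB_int; MBt).
rewrite RintegralD //; try (apply: MB_int; MBt).
rewrite RintegralD //; try (apply: MB_int; MBt).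
by rewrite Rint_cst !RintegralZl //; exact: MB_int.
Qed.

Variable n : nat.
Variable e : T -> 'rV[R]_n.
Hypothesis e_meas : forall i, measurable_fun setT (fun w => e w ord0 i).
Hypothesis e_sph : forall w, \sum_(i < n) e w ord0 i ^+ 2 = 1.
Hypothesis e_cross : forall i j : 'I_n, i != j ->
      (\int[P]_w (e w ord0 i * e w ord0 j)%:E = 0)%E.
Hypothesis e_sq : forall i : 'I_n, (\int[P]_w (e w ord0 i ^+ 2)%:E = (n%:R^-1)%:E)%E.

Lemma abs_le1 (x : R) : x ^+ 2 <= 1 -> `|x| <= 1.
Proof.
move=> hx; have := amgm 1 `|x| 1 ltr01; rewrite mul1r invr1 mulr1 expr1n real_normK ?num_real //.
move=> h; apply: le_trans h _; rewrite ler_pdivrMr // mul1r.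
lra.
Qed.

Lemma MB_e i : MB (fun w => e w ord0 i).
Proof.
split; first exact: e_meas.
exists 1 => w; apply: abs_le1; rewrite -(e_sph w) (bigD1 i) //= lerDl.
by apply: sumr_ge0 => j _; exact: sqr_ge0.
Qed.

Lemma MB_dot (g : 'rV[R]_n) : MB (fun w => dotv g (e w)).
Proof. by apply: MB_sum => i; apply: MB_mul; [exact: MB_cst|exact: MB_e]. Qed.

Lemma E_ee (i j : 'I_n) :
  Rintegral P setT (fun w => e w ord0 i * e w ord0 j) = if i == j then n%:R^-1 else 0.
Proof.
rewrite /Rintegral; case: eqP => [<-|/eqP hij].
  by under [fun w => _]funext => w do rewrite -expr2; rewrite e_sq.
by rewrite e_cross.
Qed.

Lemma E_dotdot (g h : 'rV[R]_n) :
  Rintegral P setT (fun w => dotv g (e w) * dotv h (e w)) = dotv g h / n%:R.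
Proof.
have -> : (fun w => dotv g (e w) * dotv h (e w)) =
   (fun w => \sum_(i < n) \sum_(j < n) (g ord0 i * h ord0 j) * (e w ord0 i * e w ord0 j)).
  apply: funext => w; rewrite /dotv mulr_suml; apply: eq_bigr => i _.
  rewrite mulr_sumr; apply: eq_bigr => j _; ring.
rewrite Rint_sum; last first.
  by move=> i; apply: MB_sum => j; apply: MB_mul; [exact: MB_cst|apply: MB_mul; exact: MB_e].
rewrite /dotv mulr_suml; apply: eq_bigr => i _.
rewrite Rint_sum; last by move=> j; apply: MB_mul; [exact: MB_cst|apply: MB_mul; exact: MB_e].
rewrite (bigD1 i) //= big1; last first.
  move=> j hj; rewrite RintegralZl //; last by apply: MB_int; apply: MB_mul; exact: MB_e.
  by rewrite E_ee eq_sym (negbTE hj) mulr0.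
rewrite RintegralZl //; last by apply: MB_int; apply: MB_mul; exact: MB_e.
by rewrite E_ee eqxx addr0.
Qed.
End Prob.

Section Help.
Context {R : realType}.

Lemma dotvZr (n : nat) (g h : 'rV[R]_n) (c : R) : dotv g (c *: h) = c * dotv g h.
Proof. by rewrite /dotv mulr_sumr; apply: eq_bigr => i _; rewrite !mxE mulrCA. Qed.

Lemma dotvC (n : nat) (g h : 'rV[R]_n) : dotv g h = dotv h g.
Proof. by rewrite /dotv; apply: eq_bigr => i _; rewrite mulrC. Qed.

Lemma sq_expand (n : nat) (x h : 'rV[R]_n) (b : R) :
  \sum_(i < n) (x ord0 i + b * h ord0 i) ^+ 2 =
  \sum_(i < n) x ord0 i ^+ 2 + 2 * b * dotv x h + b ^+ 2 * \sum_(i < n) h ord0 i ^+ 2.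
Proof.
rewrite /dotv !mulr_sumr -!big_split /=; apply: eq_bigr => i _; ring.
Qed.

Lemma Aseq_formula (n : nat) (m : nat) : (0 < n)%N ->
  (Aseq n m : R) = 1 - n%:R^-1 + (m%:R * (m%:R - 1) + 4 * n%:R * m%:R) / (4 * n%:R ^+ 2).
Proof.
move=> n0; have nn0 : n%:R != 0 :> R by rewrite pnatr_eq0 -lt0n.
elim: m => [|m IH].
  by rewrite /Aseq big_ord_recr big_ord0 /= add0r !mul0r mulr0 !addr0 mul0r addr0.
rewrite /Aseq big_ord_recr /= -/(Aseq n m) IH /alpha -natr1.
by field.
Qed.

Lemma A_ge (n k : nat) : (0 < n)%N ->
  n%:R ^+ 2 * alpha n k.+1 ^+ 2 <= Aseq n k.+1 :> R.
Proof.
move=> n0; have nn0 : n%:R != 0 :> R by rewrite pnatr_eq0 -lt0n.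
rewrite -subr_ge0 Aseq_formula //= -natr1.
have -> : 1 - n%:R^-1 + ((k%:R + 1) * (k%:R + 1 - 1) + 4 * n%:R * (k%:R + 1)) / (4 * n%:R ^+ 2)
   - n%:R ^+ 2 * ((k%:R + 2 * n%:R) / (2 * n%:R ^+ 2)) ^+ 2 = k%:R / (4 * n%:R ^+ 2) :> R.
  by field.
apply: divr_ge0 => //; apply: mulr_ge0 => //; exact: sqr_ge0.
Qed.

Lemma alpha_gt0 (n k : nat) : (0 < n)%N -> 0 < alpha n k.+1 :> R.
Proof.
move=> n0; rewrite /alpha; apply: divr_gt0.
  apply: ltr_wpDl => //; apply: mulr_gt0 => //; by rewrite ltr0n.
apply: mulr_gt0 => //; apply: exprn_gt0; by rewrite ltr0n.
Qed.

Lemma abs_bound (n : nat) (g : 'rV[R]_n) : (0 < n)%N ->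
  exists k0 k1 : R, (forall v : 'rV[R]_n, `|dotv g v| <= k0 + k1 * dotv g v ^+ 2) /\
    k0 + k1 * ((\sum_(i < n) g ord0 i ^+ 2) / n%:R) =
    Num.sqrt (\sum_(i < n) g ord0 i ^+ 2) / Num.sqrt n%:R.
Proof.
move=> n0; set G2 := \sum_(i < n) g ord0 i ^+ 2.
have G20 : 0 <= G2 by apply: sumr_ge0 => i _; exact: sqr_ge0.
have nn0 : 0 < n%:R :> R by rewrite ltr0n.
case: (eqVneq G2 0) => hG.
  exists 0, 0; split; last by rewrite hG sqrtr0 !mul0r addr0.
  move=> v; rewrite mul0r addr0 normr_le0 /dotv; apply/eqP/big1 => i _.
  have := psumr_eq0P (fun j _ => sqr_ge0 (g ord0 j)) hG; move/(_ i isT)/eqP.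
  by rewrite sqrf_eq0 => /eqP ->; rewrite mul0r.
have Gp : 0 < G2 by rewrite lt0r hG.
set r1 := Num.sqrt G2; set r2 := Num.sqrt n%:R.
have r1p : 0 < r1 by rewrite sqrtr_gt0.
have r2p : 0 < r2 by rewrite sqrtr_gt0.
set lam := r2 / r1.
have lp : 0 < lam by exact: divr_gt0.
exists (lam^-1 / 2), (lam / 2); split.
  move=> v; have := amgm lam `|dotv g v| 1 lp; rewrite mulr1 expr1n real_normK ?num_real //.
  move=> h; apply: le_trans h _; rewrite le_eqVlt; apply/orP; left; apply/eqP; field.
  by rewrite lt0r_neq0.
have e1 : G2 = r1 ^+ 2 by rewrite sqr_sqrtr.
have e2 : n%:R = r2 ^+ 2 by rewrite sqr_sqrtr // ltW.
rewrite -/G2 /lam e1 e2; field.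
by rewrite !lt0r_neq0.
Qed.
End Help.

Lemma MB_intE {R : realType} {d : measure_display} {T : measurableType d}
  (P : probability T R) (h : T -> R) :
  MB h -> (\int[P]_w (h w)%:E)%E = (Rintegral P setT h)%:E.
Proof.
move=> hh; rewrite /Rintegral fineK //; apply: integrable_fin_num => //.
exact: MB_int.
Qed.

Lemma dotvv {R : realType} {n : nat} (g : 'rV[R]_n) : dotv g g = \sum_(i < n) g ord0 i ^+ 2.
Proof. by rewrite /dotv; apply: eq_bigr => i _; rewrite expr2. Qed.

Ltac MBt := repeat first [assumption | exact: MB_cst | apply: MB_add | apply: MB_mul].

Theorem corollary3
  (R : realType) (n : nat) (hn : (0 < n)%N) (L delta : R) (hL : 0 < L)
  (f : 'rV[R]_n -> R^o) (gradf : 'rV[R]_n -> 'rV[R]_n)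
  (f_diff : forall x, differentiable f x /\ forall h, 'd f x h = dotv (gradf x) h)
  (f_convex : forall (x y : 'rV[R]_n) (t : R), 0 <= t <= 1 ->
      f (t *: x + (1 - t) *: y) <= t * f x + (1 - t) * f y)
  (f_lip : forall x y, norm2 (gradf x - gradf y) <= L * norm2 (x - y))
  (* history of iterations 1..k *)
  (k : nat) (eh : nat -> 'rV[R]_n) (dh : nat -> R) (x u : nat -> 'rV[R]_n)
  (hist_e : forall i, (0 < i <= k)%N -> norm2 (eh i) = 1)
  (hist_d : forall i, (0 < i <= k)%N -> `|dh i| <= delta)
  (x0u0 : x 0%N = u 0%N)
  (hist_step : forall i, (i < k)%N ->
      mtm_step L gradf i (x i) (u i) (eh i.+1) (dh i.+1) (x i.+1) (u i.+1))
  (* randomness of iteration k+1, conditionally on iterations 1..k *)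
  (d : measure_display) (Omega : measurableType d) (P : probability Omega R)
  (e : Omega -> 'rV[R]_n) (dt : Omega -> R)
  (e_meas : forall i, measurable_fun setT (fun w => e w ord0 i))
  (dt_meas : measurable_fun setT dt)
  (e_sphere : forall w, norm2 (e w) = 1)
  (dt_bound : forall w, `|dt w| <= delta)
  (e_cross : forall i j : 'I_n, i != j ->
      (\int[P]_w (e w ord0 i * e w ord0 j)%:E = 0)%E)
  (e_sq : forall i : 'I_n, (\int[P]_w (e w ord0 i ^+ 2)%:E = (n%:R^-1)%:E)%E)
  (xn un : Omega -> 'rV[R]_n)
  (step_next : forall w,
      mtm_step L gradf k (x k) (u k) (e w) (dt w) (xn w) (un w))
  (uu : 'rV[R]_n) :
  let y := ynext k (x k) (u k) in
  let Rk := normL L (u k - uu) in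
  let Mk := norm2 (gradf y) in
  ((alpha n k.+1 * dotv (gradf y) (u k - uu))%:E <=
     (Aseq n k.+1)%:E * ((f y)%:E - \int[P]_w (f (xn w))%:E)
     + (Vdist L uu (u k))%:E - \int[P]_w (Vdist L uu (un w))%:E
     + (Aseq n k.+1 / L * delta ^+ 2
        + Aseq n k.+1 * delta * Mk / (L * Num.sqrt n%:R)
        + alpha n k.+1 * delta * Num.sqrt n%:R / Num.sqrt L * Rk)%:E)%E.
Proof.
cbv zeta.
set y := ynext k (x k) (u k).
set Rk := normL L (u k - uu).
set Mk := norm2 (gradf y).
set a := alpha n k.+1; set A := Aseq n k.+1; set g0 := gradf y.
set c := u k - uu; set nn : R := n%:R.
set C := A / L * delta ^+ 2 + A * delta * Mk / (L * Num.sqrt nn) +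
         a * delta * Num.sqrt nn / Num.sqrt L * Rk.
have nn0 : 0 < nn by rewrite ltr0n.
have a0 : 0 < a := alpha_gt0 n k hn.
have Age : nn ^+ 2 * a ^+ 2 <= A := A_ge n k hn.
have A0 : 0 < A.
  apply: lt_le_trans Age; apply: mulr_gt0; exact: exprn_gt0.
have hdel : 0 <= delta.
  case: (pselect (exists w : Omega, True)) => [[w0 _]|hne].
    exact: le_trans (normr_ge0 _) (dt_bound w0).
  exfalso; have hT : (setT : set Omega) = set0.
    by apply/seteqP; split => w // _; apply: hne; exists w.
  have h1 := probability_setT P; move: h1; rewrite hT measure0 => /eqP.
  by rewrite eq_sym onee_eq0.
have esph w : \sum_(i < n) e w ord0 i ^+ 2 = 1.
  by rewrite -sqr_norm2 e_sphere expr1n.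
pose p := fun w => dotv g0 (e w).
pose q := fun w => dotv c (e w).
pose D := dt.
pose s := fun w => p w + D w.
pose tau := nn ^+ 2 * a ^+ 2 / (A * L).
have hun w : un w = u k - (a / L) *: ((nn * s w) *: e w).
  case: (step_next w) => hmin _; rewrite (argmin_eq _ _ _ _ _ hL hmin).
  by rewrite /gtilde /s /p /D -/y.
have hxn w : xn w = y + (- (tau * s w)) *: e w.
  case: (step_next w) => _ ->; rewrite hun; apply/rowP => j; rewrite !mxE.
  rewrite -/a -/A -/nn /tau; field.
  by rewrite !lt0r_neq0.
pose U := fun w => f y + (- tau) * (s w * p w) + (L / 2 * tau ^+ 2) * (s w * s w).
have hfx w : f (xn w) <= U w.
  rewrite hxn; apply: le_trans (descent _ _ _ hL f_diff f_lip _ _) _.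
  rewrite dotvZr sum_sq_scale esph -/g0 /U /s /p.
  rewrite le_eqVlt; apply/orP; left; apply/eqP; ring.
set V0 := Vdist L uu (u k).
pose Vf := fun w => V0 + (- (a * nn)) * (s w * q w) + (a ^+ 2 * nn ^+ 2 / (2 * L)) * (s w * s w).
have hV w : Vdist L uu (un w) = Vf w.
  rewrite hun /Vf /V0 !VdistE ?ltW //.
  have -> : \sum_(i < n) (uu ord0 i - (u k - (a / L) *: ((nn * s w) *: e w)) ord0 i) ^+ 2 =
    \sum_(i < n) ((uu - u k) ord0 i + (a / L * (nn * s w)) * e w ord0 i) ^+ 2.
    by apply: eq_bigr => i _; rewrite !mxE; ring.
  rewrite sq_expand esph.
  have -> : dotv (uu - u k) (e w) = - q w.
    rewrite /q /c /dotv -sumrN; apply: eq_bigr => i _; rewrite !mxE; ring.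
  have -> : \sum_(i < n) (uu - u k) ord0 i ^+ 2 = \sum_(i < n) (uu ord0 i - u k ord0 i) ^+ 2.
    by apply: eq_bigr => i _; rewrite !mxE.
  by field; rewrite lt0r_neq0.
have hMe i : MB (fun w => e w ord0 i) := MB_e n e e_meas esph i.
have hp : MB p := MB_dot n e e_meas esph g0.
have hq : MB q := MB_dot n e e_meas esph c.
have hD : MB D by split => //; exists delta.
have hs : MB s by MBt.
have hU : MB U by MBt.
have hVf : MB Vf by MBt.
have I1 : (\int[P]_w (f (xn w))%:E <= \int[P]_w (U w)%:E)%E.
  by apply: int_mono_any => w; rewrite lee_fin.
have I2 : (\int[P]_w (Vdist L uu (un w))%:E = \int[P]_w (Vf w)%:E)%E.
  by apply: eq_integral => w _; rewrite hV.
rewrite I2 (MB_intE P _ hVf); rewrite (MB_intE P _ hU) in I1.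
set rU := Rintegral P setT U in I1 *; set rV := Rintegral P setT Vf.
apply: (@le_trans _ _ (A * (f y - rU) + V0 - rV + C)%:E); last first.
  rewrite EFinD EFinB EFinD EFinM EFinB.
  apply: leeD => //; apply: leeB => //; apply: leeD => //.
  apply: lee_wpmul2l; first by rewrite lee_fin ltW.
  exact: leeB.
rewrite lee_fin.
have [k0 [k1 [hk1 hk2]]] := abs_bound n g0 hn.
have [j0 [j1 [hj1 hj2]]] := abs_bound n c hn.
pose K := C - A / L * delta * k0 - A / L * delta ^+ 2 - a * nn * delta * j0.
pose PQ := fun w => p w * q w.
pose PP := fun w => p w * p w.
pose QQ := fun w => q w * q w.
have hPQ : MB PQ by MBt.
have hPP : MB PP by MBt.
have hQQ : MB QQ by MBt.
pose W2 := fun w => K + (a * nn) * PQ w + (- (A / L * delta * k1)) * PP w +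
   (- (a * nn * delta * j1)) * QQ w.
pose Wf := fun w => (A * f y + V0 + C) + (- A) * U w + (-1) * Vf w + 0 * U w.
have hW2 : MB W2 by MBt.
have hWf : MB Wf by MBt.
have eW2 := Rint_lin P K (a * nn) (- (A / L * delta * k1)) (- (a * nn * delta * j1)) _ _ _ hPQ hPP hQQ.
have eWf := Rint_lin P (A * f y + V0 + C) (- A) (-1) 0 _ _ _ hU hVf hU.
have ePQ : Rintegral P setT PQ = dotv g0 c / nn := E_dotdot P n e e_meas esph e_cross e_sq g0 c.
have ePP : Rintegral P setT PP = dotv g0 g0 / nn := E_dotdot P n e e_meas esph e_cross e_sq g0 g0.
have eQQ : Rintegral P setT QQ = dotv c c / nn := E_dotdot P n e e_meas esph e_cross e_sq c c.
have hpt : forall w, setT w -> W2 w <= Wf w.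
  move=> w _; rewrite /W2 /Wf /PQ /PP /QQ /U /Vf /s.
  have hpb : `|p w| <= k0 + k1 * p w ^+ 2 := hk1 (e w).
  have hqb : `|q w| <= j0 + j1 * q w ^+ 2 := hj1 (e w).
  have hDD : `|D w| <= delta := dt_bound w.
  set pp := p w; set qq := q w; set DD := D w.
  set kap := nn ^+ 2 * a ^+ 2 / L.
  have L0 : 0 < L^-1 by rewrite invr_gt0.
  have kapA : kap <= A / L by rewrite /kap ler_pM2r.
  have kap0 : 0 <= kap.
    by apply: divr_ge0; [apply: mulr_ge0; apply: sqr_ge0|exact: ltW].
  have r1 : nn ^+ 2 * a ^+ 2 / A <= 1 by rewrite ler_pdivrMr // mul1r.
  have b1 : 0 <= kap / 2 * (1 - nn ^+ 2 * a ^+ 2 / A) * ((pp + DD) * (pp + DD)).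
    apply: mulr_ge0; last by rewrite -expr2; exact: sqr_ge0.
    apply: mulr_ge0; [exact: divr_ge0|by rewrite subr_ge0].
  have hpD : kap * (pp * DD) <= A / L * delta * (k0 + k1 * pp ^+ 2).
    apply: (@le_trans _ _ (kap * (`|pp| * delta))).
      apply: ler_wpM2l => //; apply: le_trans (ler_norm _) _.
      by rewrite normrM; apply: ler_wpM2l => //; exact: normr_ge0.
    apply: (@le_trans _ _ (A / L * (`|pp| * delta))).
      by apply: ler_wpM2r => //; apply: mulr_ge0 => //; exact: normr_ge0.
    rewrite (_ : A / L * delta * (k0 + k1 * pp ^+ 2) = A / L * ((k0 + k1 * pp ^+ 2) * delta)); last by ring.
    apply: ler_wpM2l; [exact: ltW (divr_gt0 A0 hL) | exact: ler_wpM2r].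
  have hDDb : kap * (DD * DD) <= A / L * delta ^+ 2.
    apply: (@le_trans _ _ (kap * delta ^+ 2)); last by apply: ler_wpM2r => //; exact: sqr_ge0.
    apply: ler_wpM2l => //; rewrite -expr2 -real_normK ?num_real //.
    by rewrite expr2 [X in _ <= X]expr2; apply: ler_pM => //; exact: normr_ge0.
  have hDq : - (DD * qq) <= delta * (j0 + j1 * qq ^+ 2).
    apply: le_trans (ler_norm _) _; rewrite normrN normrM.
    apply: ler_pM => //; exact: normr_ge0.
  have anp : 0 <= a * nn by apply: mulr_ge0; exact: ltW.
  have b4 : 0 <= a * nn * (delta * (j0 + j1 * qq ^+ 2) + DD * qq).
    by apply: mulr_ge0 => //; move: hDq; rewrite -subr_ge0 opprK.
  rewrite -subr_ge0.
  apply: (@le_trans _ _ (kap / 2 * (1 - nn ^+ 2 * a ^+ 2 / A) * ((pp + DD) * (pp + DD)) +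
     (A / L * delta * (k0 + k1 * pp ^+ 2) - kap * (pp * DD)) +
     (A / L * delta ^+ 2 - kap * (DD * DD)) +
     a * nn * (delta * (j0 + j1 * qq ^+ 2) + DD * qq))).
    apply: addr_ge0; last exact: b4.
    apply: addr_ge0; last by rewrite subr_ge0.
    by apply: addr_ge0 => //; rewrite subr_ge0.
  rewrite le_eqVlt; apply/orP; left; apply/eqP.
  rewrite /K /kap /tau; field.
  by rewrite !lt0r_neq0.
have H := le_Rintegral measurableT (MB_int P _ hW2) (MB_int P _ hWf) hpt.
rewrite /W2 /Wf eW2 eWf ePQ ePP eQQ -/rU -/rV in H.
apply: le_trans (le_trans _ H) _; last first.
  rewrite le_eqVlt; apply/orP; left; apply/eqP; ring.
rewrite le_eqVlt; apply/orP; left; apply/eqP.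
rewrite !dotvv.
set G2 := \sum_(i < n) g0 ord0 i ^+ 2 in hk2 *.
set C2 := \sum_(i < n) c ord0 i ^+ 2 in hj2 *.
have ek0 : k0 = Num.sqrt G2 / Num.sqrt nn - k1 * (G2 / nn) by rewrite -hk2; ring.
have ej0 : j0 = Num.sqrt C2 / Num.sqrt nn - j1 * (C2 / nn) by rewrite -hj2; ring.
rewrite /K ek0 ej0 /C /Mk /Rk /normL /norm2 -/g0 -/c -/G2 -/C2 sqrtrM ?ltW //.
set r2 := Num.sqrt nn; set rL := Num.sqrt L.
have r2p : 0 < r2 by rewrite sqrtr_gt0.
have rLp : 0 < rL by rewrite sqrtr_gt0.
have e2 : nn = r2 ^+ 2 by rewrite sqr_sqrtr // ltW.
rewrite e2; field.
by rewrite !lt0r_neq0.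
Qed.
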